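(* Let $T$ be a tree on $n\ge2$ vertices, $k\ge2$ even, and $M$ the order-$k$ Steiner distance hypermatrix of $T$. For every $\mathbf{c}\in\mathcal{H}_n$, writing $\alpha'_e=\mathbf{c}^T\mathbf{a}'_e$ for $e\in E(T)$, $$M(\mathbf{c},\ldots,\mathbf{c})=-2\sum_{e\in E(T)}(\alpha'_e)^k.$$
   Context: $T$ is a tree with vertex set $\{1,\dots,n\}$ and edge set $E(T)$. For $U\subseteq V(T)$, the Steiner distance $S(U)$ is the minimum number of edges of a connected subgraph of $T$ whose vertex set contains $U$. The order-$k$ Steiner distance hypermatrix $M$ of $T$ has entries $M_{(i_1,\dots,i_k)}=S(\{i_1,\dots,i_k\})$, and $M(\mathbf{x}_1,\dots,\mathbf{x}_k)=\sum_{\mathbf{i}\in V(T)^k}M_{\mathbf{i}}\prod_{j=1}^k x_{j i_j}$. For an edge $e$, $A(e)$ and $B(e)$ are the vertex sets of the two components of $T-e$ (labeled arbitrarily), $\mathbf{a}_e$ is the indicator vector of $A(e)$, $\mathbb{J}$ is the all-ones vector in $\mathbb{R}^n$, and $\mathbf{a}'_e=\mathbf{a}_e-\frac{|A(e)|}{n}\mathbb{J}$. $\mathcal{H}_n=\{\mathbf{c}\in\mathbb{R}^n:\mathbf{c}^T\mathbb{J}=0\}$. *)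

(* Defs.v *)
From mathcomp Require Import all_boot all_order all_algebra.
Set Implicit Arguments. Unset Strict Implicit. Unset Printing Implicit Defensive.
Import Order.TTheory GRing.Theory Num.Theory.

(* A simple graph on vertex set 'I_n (standing for {1,...,n}) is given by a
   symmetric irreflexive adjacency relation. *)
Definition simple_graph (n : nat) (g : rel 'I_n) : Prop :=
  symmetric g /\ irreflexive g.

Definition edges (n : nat) (g : rel 'I_n) : {set {set 'I_n}} :=
  [set f : {set 'I_n} | [exists x : 'I_n, exists y : 'I_n, g x y && (f == [set x; y])]].

Definition is_cycle (n : nat) (g : rel 'I_n) (p : seq 'I_n) : bool :=
  (3 <= size p) && ucycleb g p.

Definition is_tree (n : nat) (g : rel 'I_n) : Prop :=
  simple_graph g /\ (forall x y, connect g x y) /\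
  (forall p, ~~ is_cycle g p).

Definition del_edge (n : nat) (g : rel 'I_n) (f : {set 'I_n}) : rel 'I_n :=
  fun a b => g a b && ([set a; b] != f).

Definition comp_del (n : nat) (g : rel 'I_n) (f : {set 'I_n}) (x : 'I_n)
  : {set 'I_n} := [set z | connect (del_edge g f) x z].

Definition steiner_ok (n : nat) (g : rel 'I_n) (U W : {set 'I_n})
  (F : {set {set 'I_n}}) : bool :=
  [&& U \subset W,
      F \subset edges g,
      [forall f in F, f \subset W] &
      [forall x in W, forall y in W,
         connect (fun a b => [set a; b] \in F) x y]].

(* Steiner distance: minimum number of edges of such a subgraph
   (n is an upper bound for the minimum in a tree, since (V, E(T)) works). *)
Definition steiner (n : nat) (g : rel 'I_n) (U : {set 'I_n}) : nat :=
  \big[minn/n]_(W : {set 'I_n})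
     \big[minn/n]_(F : {set {set 'I_n}} | steiner_ok g U W F) #|F|.

Local Open Scope ring_scope.

Definition steiner_form (R : ringType) (n k : nat) (g : rel 'I_n)
  (c : 'I_n -> R) : R :=
  \sum_(i : {ffun 'I_k -> 'I_n})
     (steiner g [set i j | j : 'I_k])%:R * \prod_(j : 'I_k) c (i j).

(* alpha'_e = c^T a'_e, a'_e = a_e - |A(e)|/n J *)
Definition alpha' (R : fieldType) (n : nat) (c : 'I_n -> R) (A : {set 'I_n}) : R :=
  \sum_(i : 'I_n) c i * ((i \in A)%:R - (#|A|)%:R / n%:R).

(* Main.v *)
Require Import Defs.
From mathcomp Require Import all_boot all_order all_algebra.
From mathcomp Require Import ring.
Import Order.TTheory GRing.Theory Num.Theory.
Set Implicit Arguments. Unset Strict Implicit. Unset Printing Implicit Defensive.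

Lemma connect_induct (T : finType) (e : rel T) (Q : T -> Prop) s :
  Q s -> (forall a b, connect e s a -> Q a -> e a b -> Q b) ->
  forall t, connect e s t -> Q t.
Proof.
move=> Qs step t /connectP [p pth ->].
elim/last_ind: p pth => [//|p x IH].
rewrite rcons_path last_rcons => /andP [pp ex].
apply: (step (last s p)) => //; last exact: IH.
by apply/connectP; exists p.
Qed.

Lemma del_sym n (g : rel 'I_n) f : symmetric g -> symmetric (del_edge g f).
Proof. by move=> sg a b; rewrite /del_edge sg setUC. Qed.

Lemma edgesP n (g : rel 'I_n) f : f \in edges g ->
  exists x y, g x y /\ f = [set x; y].
Proof.
by rewrite inE => /existsP [x /existsP [y /andP [gxy /eqP ->]]]; exists x, y.
Qed.

Lemma edge_adj n (g : rel 'I_n) a b : simple_graph g -> [set a; b] \in edges g -> g a b.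
Proof.
case=> sg ig /edgesP [x [y [gxy e]]].
have xy : x != y by apply: contraTneq gxy => ->; rewrite ig.
have ha : a \in [set x; y] by rewrite -e set21.
have hb : b \in [set x; y] by rewrite -e set22.
have hx : x \in [set a; b] by rewrite e set21.
have hy : y \in [set a; b] by rewrite e set22.
move: ha hb hx hy; rewrite !inE.
case/orP=> /eqP ->; case/orP=> /eqP -> //; rewrite ?eqxx ?orbb.
- by move=> _ /eqP yx; rewrite yx eqxx in xy.
- by rewrite sg.
- by move=> /eqP yx; rewrite yx eqxx in xy.
Qed.

Lemma edge_at n (g : rel 'I_n) f z : simple_graph g -> f \in edges g -> z \in f ->
  exists a, g z a /\ f = [set z; a].
Proof.
case=> sg ig /edgesP [x [y [gxy ->]]]; rewrite !inE => /orP[]/eqP->.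
- by exists y.
- by exists x; rewrite sg setUC.
Qed.

Lemma tree_noconn n (g : rel 'I_n) x y : is_tree g -> g x y ->
  ~~ connect (del_edge g [set x; y]) x y.
Proof.
case=> [[sg ig] [_ nocyc]] gxy; apply/negP => /connectP [p pth lst].
case: (shortenP pth) lst => p' pth' up' _ lst.
suff : is_cycle g (x :: p') by rewrite (negbTE (nocyc _)).
rewrite /is_cycle /ucycleb up' andbT /=.
rewrite rcons_path -lst sg gxy andbT.
rewrite (sub_path _ pth') ?andbT; last by move=> a b /andP[].
case: p' pth' up' lst => [|z [|w q]] //=.
- by move=> _ _ xy; rewrite -xy ig in gxy.
- by rewrite andbT => dxz _ zy; move: dxz; rewrite /del_edge -zy eqxx andbF.
Qed.

Lemma tree_cover n (g: rel 'I_n) x y z : is_tree g -> g x y ->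
  connect (del_edge g [set x; y]) x z || connect (del_edge g [set x; y]) y z.
Proof.
case=> [[sg ig] [conn _]] gxy.
apply: (@connect_induct _ g (fun z => is_true (connect (del_edge g [set x; y]) x z || connect (del_edge g [set x; y]) y z)) x); [by rewrite connect0 | | exact: conn].
move=> a b _ /orP H gab.
case: (eqVneq [set a; b] [set x; y]) => E.
- have : b \in [set x; y] by rewrite -E set22.
  by rewrite !inE => /orP[]/eqP->; rewrite connect0 ?orbT.
- have dab : del_edge g [set x;y] a b by rewrite /del_edge gab E.
  by case: H => H; apply/orP; [left|right]; exact: connect_trans H (connect1 dab).
Qed.

Lemma comp_compl n (g: rel 'I_n) x y z : is_tree g -> g x y ->
  (z \in comp_del g [set x; y] y) = (z \notin comp_del g [set x; y] x).
Proof.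
move=> T gxy; have cs := sym_connect_sym (del_sym [set x; y] T.1.1).
rewrite !inE; have := tree_cover z T gxy; have := tree_noconn T gxy.
case yz: (connect _ y z); case xz: (connect _ x z) => //= + _.
by move=> /negP[]; rewrite (connect_trans xz) // cs.
Qed.

Definition sepset n (g : rel 'I_n) (A : {set 'I_n} -> {set 'I_n}) (U : {set 'I_n}) :=
  [set f in edges g | (U :&: A f != set0) && (U :\: A f != set0)].

Definition relF n (F : {set {set 'I_n}}) : rel 'I_n := fun a b => [set a; b] \in F.

Lemma relF_sym n (F : {set {set 'I_n}}) : symmetric (relF F).
Proof. by move=> a b; rewrite /relF setUC. Qed.

Lemma sides n (g : rel 'I_n) A f : is_tree g ->
  (forall f, f \in edges g -> exists2 x, x \in f & A f = comp_del g f x) ->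
  f \in edges g -> exists x y, [/\ g x y, f = [set x; y] & A f = comp_del g f x].
Proof.
move=> T hA fe; case: (hA f fe) => x xf eA.
case: (edge_at T.1 fe xf) => y [gxy ef]; exists x, y; split => //.
Qed.

Lemma sep_sub n (g : rel 'I_n) A U W F : is_tree g ->
  (forall f, f \in edges g -> exists2 x, x \in f & A f = comp_del g f x) ->
  steiner_ok g U W F -> sepset g A U \subset F.
Proof.
move=> T hA /and4P [UW FE FW Wc]; apply/subsetP => f; rewrite inE.
case/andP => fe /andP [/set0Pn [u /setIP [uU uA]] /set0Pn [v /setDP [vU vA]]].
case: (sides T hA fe) => x [y [gxy ef eA]].
apply/negPn/negP => fF.
have uW := subsetP UW u uU; have vW := subsetP UW v vU.
have cuv : connect (relF F) u v by move/forall_inP: Wc => /(_ u uW) /forall_inP /(_ v vW).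
have : connect (del_edge g f) u v.
  apply: connect_sub cuv => a b abF; apply: connect1.
  rewrite /del_edge (edge_adj T.1 (subsetP FE _ abF)) /=.
  by apply: contraNneq fF => <-.
move: uA vA; rewrite eA !inE => xu /negP nv uv; apply: nv.
exact: connect_trans xu uv.
Qed.

Lemma prune_side n (g : rel 'I_n) (U W : {set 'I_n}) (F : {set {set 'I_n}}) s t : is_tree g -> g s t ->
  [set s; t] \in F -> steiner_ok g U W F ->
  U \subset comp_del g [set s; t] s ->
  exists W' F', steiner_ok g U W' F' && (#|F'| < #|F|).
Proof.
move=> T gst fF /and4P [UW FE FW Wc] UC.
set f := [set s; t] in fF UC *.
set C := comp_del g f s in UC *.
have tC : t \notin C by rewrite inE; exact: tree_noconn T gst.
have sC : s \in C by rewrite inE connect0.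
have cs := sym_connect_sym (del_sym f T.1.1).
pose F' := [set h in F | h \subset C].
have sW : s \in W by move/forall_inP: FW => /(_ f fF) /subsetP; apply; rewrite set21.
have key : forall z, z \in W -> z \in C -> connect (relF F') s z.
  move=> z zW; have : connect (relF F) s z.
    by move/forall_inP: Wc => /(_ s sW) /forall_inP /(_ z zW).
  apply: (@connect_induct _ (relF F) (fun z => z \in C -> connect (relF F') s z) s).
  - by move=> _; rewrite connect0.
  - move=> a b _ Qa abF bC.
    case: (eqVneq [set a; b] f) => E.
    + have : b \in f by rewrite -E set22.
      rewrite !inE => /orP[]/eqP bst; first by rewrite bst connect0.
      by rewrite -bst bC in tC.
    + have gab := edge_adj T.1 (subsetP FE _ abF).
      have dba : del_edge g f b a by rewrite /del_edge T.1.1 gab setUC E.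
      have aC : a \in C by move: bC; rewrite !inE => sb; exact: connect_trans sb (connect1 dba).
      apply: connect_trans (Qa aC) (connect1 _).
      rewrite /relF inE; move: abF; rewrite /relF => -> /=; apply/subsetP => w; rewrite in_set2.
      by case/orP=> /eqP->.
exists (W :&: C), F'; apply/andP; split.
- apply/and4P; split.
  + by rewrite subsetI UW UC.
  + by apply: subset_trans FE; apply/subsetP => h; rewrite inE => /andP[].
  + apply/forall_inP => h; rewrite inE => /andP [hF hC].
    by rewrite subsetI hC (forall_inP FW h hF).
  + apply/forall_inP => a /setIP [aW aC]; apply/forall_inP => b /setIP [bW bC].
    have := key a aW aC; rewrite (sym_connect_sym (@relF_sym n F')) => /connect_trans; apply.
    exact: key.
- apply: proper_card; apply/properP; split.
  + by apply/subsetP => h; rewrite inE => /andP[].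
  + exists f => //; rewrite inE fF /=; apply/negP => /subsetP /(_ t).
    by rewrite set22 (negbTE tC) => /(_ isT).
Qed.

Lemma prune n (g : rel 'I_n) A (U W : {set 'I_n}) (F : {set {set 'I_n}}) f : is_tree g ->
  (forall f, f \in edges g -> exists2 x, x \in f & A f = comp_del g f x) ->
  steiner_ok g U W F -> f \in F -> f \notin sepset g A U ->
  exists W' F', steiner_ok g U W' F' && (#|F'| < #|F|).
Proof.
move=> T hA ok fF fS.
have fe : f \in edges g by case/and4P: ok => _ FE _ _; exact: subsetP FE f fF.
case: (sides T hA fe) => x [y [gxy ef eA]].
move: fS; rewrite inE fe /= negb_and !negbK => /orP [] /eqP H0.
- (* U inside complement: side y *)
  have gyx : g y x by rewrite T.1.1.
  apply: (@prune_side n g U W F y x T gyx); first by rewrite setUC -ef.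
    exact: ok.
  rewrite setUC -ef; apply/subsetP => u uU.
  rewrite ef comp_compl // -ef -eA; apply/negP => uA.
  have : u \in U :&: A f by rewrite inE uU uA.
  by rewrite H0 inE.
- apply: (@prune_side n g U W F x y T gxy); first by rewrite -ef.
    exact: ok.
  rewrite -ef -eA; apply/subsetP => u uU; apply/negPn/negP => uA.
  have : u \in U :\: A f by rewrite inE uU uA.
  by rewrite H0 inE.
Qed.

Lemma exists_sub n (g : rel 'I_n) A (U : {set 'I_n}) : is_tree g ->
  (forall f, f \in edges g -> exists2 x, x \in f & A f = comp_del g f x) ->
  forall m (W : {set 'I_n}) (F : {set {set 'I_n}}), #|F| <= m -> steiner_ok g U W F ->
  exists W' F', steiner_ok g U W' F' && (F' \subset sepset g A U).
Proof.
move=> T hA; elim=> [|m IH] W F Fm ok.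
- exists W, F; rewrite ok /=; move: Fm; rewrite leqn0 cards_eq0 => /eqP ->.
  exact: sub0set.
- case: (boolP (F \subset sepset g A U)) => sub; first by exists W, F; rewrite ok.
  case/subsetPn: sub => f fF fS.
  case: (prune T hA ok fF fS) => W' [F' /andP [ok' lt]].
  apply: (IH W' F') => //; rewrite -ltnS; exact: leq_trans lt Fm.
Qed.

Lemma ok_full n (g : rel 'I_n) (U : {set 'I_n}) : is_tree g ->
  steiner_ok g U setT (edges g).
Proof.
case=> _ [conn _]; apply/and4P; split.
- exact: subsetT.
- exact: subxx.
- by apply/forall_inP => f _; exact: subsetT.
- apply/forall_inP => x _; apply/forall_inP => y _.
  apply: connect_sub (conn x y) => a b gab; apply: connect1.
  by rewrite /= inE; apply/existsP; exists a; apply/existsP; exists b; rewrite gab eqxx.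
Qed.

Lemma card_edges n (g : rel 'I_n) (r : 'I_n) : is_tree g -> #|edges g| <= n.
Proof.
move=> T; have [[sg ig] _] := T.
pose phi (f : {set 'I_n}) := odflt r [pick z in f | ~~ connect (del_edge g f) r z].
have cs f := sym_connect_sym (del_sym f sg).
have phiP : forall f, f \in edges g -> (phi f \in f) && ~~ connect (del_edge g f) r (phi f).
  move=> f fe; rewrite /phi; case: pickP => [z /andP [-> ->] //|none].
  case: (edgesP fe) => x [y [gxy ef]]; rewrite ef in none *.
  have nxy := tree_noconn T gxy.
  case/orP: (tree_cover r T gxy) => H.
  + have := none y; rewrite set22 /= => /negbFE yr.
    by move: nxy; rewrite (connect_trans H) // cs.
  + have := none x; rewrite set21 /= => /negbFE xr.
    by move: nxy; rewrite cs (connect_trans H) // cs.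
have inj : {in edges g &, injective phi}.
  move=> f1 f2 f1e f2e E; apply/eqP/negP => /negP ne.
  have /andP [zf1 nz1] := phiP f1 f1e.
  have /andP [zf2 nz2] := phiP f2 f2e.
  rewrite E in zf1 nz1; set z := phi f2 in zf1 zf2 nz1 nz2.
  case: (edge_at (conj sg ig) f1e zf1) => a1 [g1 e1].
  case: (edge_at (conj sg ig) f2e zf2) => a2 [g2 e2].
  have ra1 : connect (del_edge g f1) r a1.
    case/orP: (tree_cover r T g1); rewrite -e1 => H.
      by move: nz1; rewrite cs H.
    by rewrite cs.
  have na1 : ~~ connect (del_edge g f2) r a1.
    apply: contra nz2 => H; apply: connect_trans H (connect1 _).
    by rewrite /del_edge sg g1 /= setUC -e1.
  case: (boolP [exists w in f2, connect (del_edge g f1) r w]).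
  + case/exists_inP => w; rewrite e2 in_set2 => /orP [] /eqP -> rw.
      by rewrite rw in nz1.
    move: nz1 => /negP; apply; apply: connect_trans rw (connect1 _).
    by rewrite /del_edge sg g2 /= setUC -e2 eq_sym.
  + move/exists_inPn => H; move/negP: na1; apply.
    apply: (@connect_induct _ (del_edge g f1) (fun w => connect (del_edge g f2) r w) r) ra1 => //.
    move=> a b ra Qa /andP [gab _]; apply: connect_trans Qa (connect1 _).
    rewrite /del_edge gab /=; apply/negP => /eqP E2.
    by move: (H a); rewrite -E2 set21 ra => /(_ isT).
rewrite -(card_in_imset inj); apply: leq_trans (max_card _) _; by rewrite card_ord.
Qed.

Lemma bigmin_le (I : eqType) (r : seq I) (P : pred I) (F : I -> nat) d i0 :
  i0 \in r -> P i0 -> \big[minn/d]_(i <- r | P i) F i <= F i0.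
Proof.
elim: r => //= a r IH; rewrite big_cons in_cons => /orP [/eqP <- -> | ir Pi].
- exact: geq_minl.
- case: ifP => _; last exact: IH.
  exact: leq_trans (geq_minr _ _) (IH ir Pi).
Qed.

Lemma steinerE n (g : rel 'I_n) A (U : {set 'I_n}) (r : 'I_n) : is_tree g ->
  (forall f, f \in edges g -> exists2 x, x \in f & A f = comp_del g f x) ->
  steiner g U = #|sepset g A U|.
Proof.
move=> T hA.
have sn : #|sepset g A U| <= n.
  apply: leq_trans (card_edges r T); apply: subset_leq_card.
  by apply/subsetP => f; rewrite inE => /andP[].
apply/eqP; rewrite eqn_leq; apply/andP; split.
- have [W0 [F0 /andP [ok0 sub0]]] := exists_sub T hA (leqnn _) (ok_full U T).
  rewrite /steiner; apply: leq_trans; first exact: (bigmin_le _ _ (mem_index_enum W0)).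
  apply: leq_trans; first exact: (bigmin_le _ _ (mem_index_enum F0)).
  exact: subset_leq_card.
- rewrite /steiner; apply: (big_ind (fun m => #|sepset g A U| <= m)) => //.
    by move=> a b ha hb; rewrite leq_min ha hb.
  move=> W _; apply: (big_ind (fun m => #|sepset g A U| <= m)) => //.
    by move=> a b ha hb; rewrite leq_min ha hb.
  move=> F ok; apply: subset_leq_card; exact: sep_sub T hA ok.
Qed.
Local Open Scope ring_scope.

Lemma prod_forall (R : comNzRingType) n k (P : pred 'I_n) (c : 'I_n -> R) :
  \sum_(i : {ffun 'I_k -> 'I_n}) [forall j, P (i j)]%:R * \prod_(j : 'I_k) c (i j)
  = (\sum_x (P x)%:R * c x) ^+ k.
Proof.
have -> : (\sum_x (P x)%:R * c x) ^+ k = \prod_(j : 'I_k) \sum_x (P x)%:R * c x.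
  by rewrite prodr_const card_ord.
rewrite bigA_distr_bigA.
apply: eq_bigr => i _; rewrite big_split /=; congr (_ * _).
case: (boolP [forall j, P (i j)]) => [/forallP h | /forallPn [j hj]].
- by rewrite big1 // => j _; rewrite h.
- by rewrite (bigD1 j) //= (negbTE hj) mul0r.
Qed.

Lemma per_edge (R : comNzRingType) n k (S : {set 'I_n}) (c : 'I_n -> R) :
  (0 < k)%N -> ~~ odd k -> \sum_x c x = 0 ->
  \sum_(i : {ffun 'I_k -> 'I_n})
     (([set i j | j : 'I_k] :&: S != set0) && ([set i j | j : 'I_k] :\: S != set0))%:R
      * \prod_(j : 'I_k) c (i j)
  = - 2 * (\sum_(x in S) c x) ^+ k.
Proof.
move=> k0 ek c0.
have E : forall i : {ffun 'I_k -> 'I_n},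
  (([set i j | j : 'I_k] :&: S != set0) && ([set i j | j : 'I_k] :\: S != set0))%:R
  = 1 - [forall j, i j \in S]%:R - [forall j, i j \in ~: S]%:R :> R.
  move=> i.
  have -> : ([set i j | j : 'I_k] :&: S != set0) = ~~ [forall j, i j \in ~: S].
    rewrite negb_forall; apply/set0Pn/existsP => [[x /setIP [/imsetP [j _ ->] xs]]|[j hj]].
      by exists j; rewrite inE xs.
    by exists (i j); rewrite inE imset_f //; move: hj; rewrite inE negbK.
  have -> : ([set i j | j : 'I_k] :\: S != set0) = ~~ [forall j, i j \in S].
    rewrite negb_forall; apply/set0Pn/existsP => [[x /setDP [/imsetP [j _ ->] xs]]|[j hj]].
      by exists j.
    by exists (i j); rewrite inE imset_f // andbT.
  have j0 : 'I_k := Ordinal k0.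
  case: (boolP [forall j, i j \in S]) => [/forallP h1|_];
    case: (boolP [forall j, i j \in ~: S]) => [/forallP h2|_] /=.
  - by move: (h2 j0); rewrite inE h1.
  - by rewrite subr0 subrr.
  - by rewrite subr0 subrr.
  - by rewrite !subr0.
under eq_bigr do rewrite E mulrBl mulrBl mul1r.
rewrite !sumrB.
have -> : \sum_(i : {ffun 'I_k -> 'I_n}) \prod_(j : 'I_k) c (i j) = 0.
  apply: (@eq_trans _ _ ((\sum_x (predT x)%:R * c x) ^+ k)); last first.
    have -> : \sum_x (predT x)%:R * c x = \sum_x c x by apply: eq_bigr => x _; rewrite mul1r.
    by rewrite c0 expr0n (gtn_eqF k0).
  rewrite -(prod_forall k predT c); apply: eq_bigr => i _.
  by rewrite (_ : [forall j, predT (i j)] = true) ?mul1r //; apply/forallP.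
rewrite (prod_forall k (mem S)) (prod_forall k (mem (~: S))).
have -> : \sum_x (x \in ~: S)%:R * c x = \sum_x c x - \sum_x (x \in S)%:R * c x.
  rewrite -sumrB; apply: eq_bigr => x _; rewrite inE.
  by case: (x \in S) => /=; rewrite ?mul1r ?mul0r ?subrr ?subr0.
have -> : \sum_x (x \in S)%:R * c x = \sum_(x in S) c x.
  by rewrite [RHS]big_mkcond; apply: eq_bigr => x _; case: (x \in S); rewrite ?mul1r ?mul0r.
rewrite c0 !sub0r exprNn -signr_odd (negbTE ek) expr0 mul1r.
ring.
Qed.
Unset Implicit Arguments.
Local Open Scope ring_scope.

Theorem mainTheorem2 (R : realFieldType) (n k : nat) (g : rel 'I_n)
  (A : {set 'I_n} -> {set 'I_n}) (c : 'I_n -> R) :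
  (2 <= n)%N -> is_tree g -> (2 <= k)%N -> ~~ odd k ->
  (forall f, f \in edges g -> exists2 x, x \in f & A f = comp_del g f x) ->
  \sum_(i : 'I_n) c i = 0 ->
  steiner_form k g c = - 2 * \sum_(f in edges g) (alpha' c (A f)) ^+ k.
Proof.
move=> n2 T k2 ek hA c0.
have r : 'I_n := Ordinal (leq_trans (isT : (0 < 2)%N) n2).
have k0 : (0 < k)%N by apply: leq_trans k2.
have al : forall S, alpha' c S = \sum_(x in S) c x.
  move=> S; rewrite /alpha'; under eq_bigr do rewrite mulrBr.
  rewrite sumrB -mulr_suml c0 mul0r subr0 [RHS]big_mkcond.
  by apply: eq_bigr => x _; case: (x \in S); rewrite ?mulr1 ?mulr0.
rewrite /steiner_form.
under eq_bigr do rewrite (steinerE _ r T hA).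
have cardE : forall U : {set 'I_n}, (#|sepset g A U|)%:R =
   \sum_(f in edges g) ((U :&: A f != set0) && (U :\: A f != set0))%:R :> R.
  move=> U; rewrite -sum1_card natr_sum [LHS]big_mkcond [RHS]big_mkcond.
  apply: eq_bigr => f _; rewrite inE.
  by case: (f \in edges g); case: (U :&: A f != set0); case: (U :\: A f != set0).
under eq_bigr do rewrite cardE mulr_suml.
rewrite exchange_big mulr_sumr; apply: eq_bigr => f _.
by rewrite al per_edge.
Qed.
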